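(* Assume the realizability condition below. Then for each $h$, the class $$\mathcal F_h(\Upsilon_{h-1})=\{d_h=\langle\mu_{h-1},\theta_h\rangle:\mu_{h-1}\in\Upsilon_{h-1},\theta_h\in\mathbb R^{\mathsf d},\|\theta_h\|_\infty\le1,d_h\in\Delta(\mathcal X)\}$$ has an $\ell_1$ optimistic cover $\bar{\mathcal F}_h(\Upsilon_{h-1})$ of scale $\gamma$ with $|\bar{\mathcal F}_h(\Upsilon_{h-1})|\le|\Upsilon_{h-1}|(2\lceil B^\mu/\gamma\rceil)^{\mathsf d}$ and $\bar{\mathcal F}_h(\Upsilon_{h-1})\subseteq(\mathcal X\to\mathbb R_{\ge0})$.
   Context: Realizability: $\Upsilon=\bigcup_h\Upsilon_h$ is a finite class of maps $\mu_h:\mathcal X\to\mathbb R^{\mathsf d}$ ($\mathcal X$ a measurable space) containing the true low-rank MDP density features $\mu^*_h\in\Upsilon_h$, with $\int\|\mu_h(x)\|_1\,\mathrm dx\le B^\mu$ for every $\mu_h\in\Upsilon_h$. $\ell_1$ optimistic cover of scale $\gamma$ of a class $\mathcal F$: a class $\bar{\mathcal F}$ (not necessarily inside $\mathcal F$) such that for every $f\in\mathcal F$ there is $\bar f\in\bar{\mathcal F}$ with $\|f-\bar f\|_1\le\gamma$ and $f\le\bar f$ pointwise. *)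

(* Defs.v *)
From HB Require Import structures.
From mathcomp Require Import all_boot all_order all_algebra.
From mathcomp Require Import all_classical all_reals all_analysis.
Set Implicit Arguments. Unset Strict Implicit. Unset Printing Implicit Defensive.
Import Order.TTheory GRing.Theory Num.Theory.
Local Open Scope classical_set_scope.
Local Open Scope ring_scope.

Definition l1norm (R : realType) (d : nat) (v : 'rV[R]_d) : R :=
  \sum_(i < d) `|v ord0 i|.

Definition inner (R : realType) (d : nat) (v w : 'rV[R]_d) : R :=
  \sum_(i < d) v ord0 i * w ord0 i.

Definition linf_le1 (R : realType) (d : nat) (th : 'rV[R]_d) : Prop :=
  forall i : 'I_d, `|th ord0 i| <= 1.

Definition is_density (dX : measure_display) (X : measurableType dX)
  (R : realType) (mu : {measure set X -> \bar R}) (f : X -> R) : Prop :=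
  [/\ measurable_fun setT f, (forall x, 0 <= f x) &
      (\int[mu]_x (f x)%:E = 1)%E].

Definition l1dist (dX : measure_display) (X : measurableType dX)
  (R : realType) (mu : {measure set X -> \bar R}) (f g : X -> R) : \bar R :=
  (\int[mu]_x (`|f x - g x|)%:E)%E.

Definition Fclass (dX : measure_display) (X : measurableType dX)
  (R : realType) (mu : {measure set X -> \bar R}) (d : nat)
  (Ups : set (X -> 'rV[R]_d)) : set (X -> R) :=
  [set f | exists m, exists th : 'rV[R]_d,
     [/\ Ups m, linf_le1 th, f = (fun x => inner (m x) th) & is_density mu f]].

Definition optimistic_cover (dX : measure_display) (X : measurableType dX)
  (R : realType) (mu : {measure set X -> \bar R})
  (F Fbar : set (X -> R)) (gamma : R) : Prop :=
  forall f, F f -> exists2 g, Fbar g &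
    (l1dist mu f g <= gamma%:E)%E /\ (forall x, f x <= g x).

(* Main.v *)
Require Import Defs.
From HB Require Import structures.
From mathcomp Require Import all_boot all_order all_algebra.
From mathcomp Require Import all_classical all_reals all_analysis.
From mathcomp Require Import ring lra measurable_realfun.
Import Order.TTheory GRing.Theory Num.Theory.
Local Open Scope classical_set_scope.
Local Open Scope ring_scope.
Local Open Scope card_scope.

Lemma inner_diff (R : realType) (d : nat) (v a b : 'rV[R]_d) (e : R) :
  (forall i, `|a ord0 i - b ord0 i| <= e) ->
  `|inner v a - inner v b| <= l1norm v * e.
Proof.
move=> h; rewrite /inner /l1norm -sumrB mulr_suml.
apply: le_trans (ler_norm_sum _ _ _) _; apply: ler_sum => i _.
by rewrite -mulrBr normrM; apply: ler_wpM2l.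
Qed.

Lemma inner_le (R : realType) (d : nat) (v th : 'rV[R]_d) :
  linf_le1 th -> inner v th <= l1norm v.
Proof.
move=> h; rewrite /inner /l1norm; apply: ler_sum => i _.
apply: le_trans (ler_norm _) _; rewrite normrM.
by rewrite -[leRHS]mulr1; apply: ler_wpM2l.
Qed.

Lemma meas_l1 (dX : measure_display) (X : measurableType dX) (R : realType)
  (d : nat) (m : X -> 'rV[R]_d) :
  (forall i : 'I_d, measurable_fun setT (fun x => m x ord0 i)) ->
  measurable_fun setT (fun x => l1norm (m x)).
Proof.
move=> mm; rewrite /l1norm; apply: measurable_sum => i.
by apply: measurableT_comp; [exact: normr_measurable | exact: mm].
Qed.

Lemma meas_inner (dX : measure_display) (X : measurableType dX) (R : realType)
  (d : nat) (m : X -> 'rV[R]_d) (th : 'rV[R]_d) :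
  (forall i : 'I_d, measurable_fun setT (fun x => m x ord0 i)) ->
  measurable_fun setT (fun x => inner (m x) th).
Proof.
move=> mm; rewrite /inner; apply: measurable_sum => i.
by apply: measurable_funM; [exact: mm | exact: measurable_cst].
Qed.

Lemma grid_ex (R : realType) (k : nat) (y : R) : (0 < k)%N -> -1 <= y <= 1 ->
  exists j : 'I_k, `|y - (-1 + (2 * j%:R + 1) / k%:R)| <= 1 / k%:R.
Proof.
move=> k0 /andP[y1 y2].
have K0 : (0 : R) < k%:R by rewrite ltr0n.
set z := (y + 1) * k%:R / 2.
have z0 : 0 <= z by rewrite /z; apply: divr_ge0 => //; apply: mulr_ge0 => //; lra.
have zk : z <= k%:R.
  rewrite /z ler_pdivrMr // mulrC ler_pM2l //; lra.
have [j0 [hj0 hl hu]] : exists j0 : nat, [/\ (j0 < k)%N, j0%:R <= z & z <= j0%:R + 1].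
  have /andP[t1 t2] := truncn_itv z0.
  case: (ltnP (Num.truncn z) k) => hk.
    by exists (Num.truncn z); split => //; apply: ltW; rewrite -natr1 in t2.
  have kk : k.-1%:R + 1 = k%:R :> R by rewrite natr1 prednK.
  have : k%:R <= (Num.truncn z)%:R :> R by rewrite ler_nat.
  exists k.-1; split; first by rewrite prednK // leqnn.
    lra.
  lra.
exists (Ordinal hj0); rewrite /=.
set ik := 1 / k%:R.
have ik0 : 0 < ik by rewrite /ik divr_gt0.
have e1 : y + 1 = 2 * (z * ik).
  rewrite /z /ik; field; rewrite pnatr_eq0 -lt0n //.
have e2 : (2 * j0%:R + 1) / k%:R = 2 * (j0%:R * ik) + ik.
  by rewrite /ik; field; rewrite pnatr_eq0 -lt0n.
have l1 : j0%:R * ik <= z * ik by rewrite ler_pM2r.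
have l2 : z * ik <= j0%:R * ik + ik.
  by rewrite -[X in _ + X]mul1r -mulrDl ler_pM2r.
rewrite e2 ler_norml; apply/andP; split; lra.
Qed.

Definition gridv (R : realType) (d k : nat) (t : {ffun 'I_d -> 'I_k}) : 'rV[R]_d :=
  \row_(i < d) (-1 + (2 * (t i)%:R + 1) / k%:R).

Definition Gf (X : Type) (R : realType) (d k : nat) (m : X -> 'rV[R]_d)
  (th : 'rV[R]_d) (x : X) : R :=
  Num.max 0 (inner (m x) th + l1norm (m x) / k%:R).

Lemma nth_ge0 (X : Type) (R : realType) (T : Type) (Phi : T -> X -> R) :
  (forall q x, 0 <= Phi q x) ->
  forall (s : seq T) n x, 0 <= nth (fun _ => 0) (map Phi s) n x.
Proof. by move=> h; elim=> [|q s IH] [|n] x //=. Qed.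

Theorem lemma13 (dX : measure_display) (X : measurableType dX) (R : realType)
  (mu : {measure set X -> \bar R}) (d : nat)
  (Ups : set (X -> 'rV[R]_d)) (N : nat) (Bmu gamma : R) :
  (Ups #= `I_N)%card ->
  (forall m, Ups m -> forall i : 'I_d, measurable_fun setT (fun x => m x ord0 i)) ->
  (forall m, Ups m -> (\int[mu]_x (l1norm (m x))%:E <= Bmu%:E)%E) ->
  0 < gamma ->
  exists Fbar : set (X -> R),
    [/\ optimistic_cover mu (Fclass mu Ups) Fbar gamma,
        (exists M : nat, (Fbar #<= `I_M)%card /\
           (M%:R <= N%:R * (2 * (Num.ceil (Bmu / gamma))%:~R) ^+ d :> R)) &
        (forall g, Fbar g -> forall x, 0 <= g x)].
Proof.
move=> hcard hmeas hB hg.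
have [hle1 hle2] : Ups #<= `I_N /\ `I_N #<= Ups by move: hcard; rewrite card_eq_le => /andP.
have [u hu] : exists u : nat -> (X -> 'rV[R]_d),
    forall m, Ups m -> exists2 n, (n < N)%N & u n = m.
  have := pfcard_geP hle1; case=> [->|/surjfunPex [f hf]].
    by exists (fun _ _ => 0) => m.
  exists f => m; rewrite hf => -[n hn <-]; by exists n.
set c := Num.ceil (Bmu / gamma).
set p := `|c|%N.
set k := (2 * p)%N.
pose T := ('I_N * {ffun 'I_d -> 'I_k})%type.
pose Phi (q : T) := @Gf X R d k (u (val q.1)) (@gridv R d k q.2).
pose psi n := nth (fun _ => 0) (map Phi (enum {: 'I_N * {ffun 'I_d -> 'I_k}})) n.
have Phi0 : forall q x, 0 <= Phi q x by move=> q x; rewrite /Phi /Gf le_max lexx.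
exists (psi @` `I_#|{: 'I_N * {ffun 'I_d -> 'I_k}}|); split.
- move=> f [m [th [hm hth -> [mf f0 If1]]]].
  move: If1 f0 mf => /= If1 f0 mf.
  have [n hn hun] := hu m hm.
  have mm := hmeas m hm.
  have Bge1 : 1 <= Bmu.
    have h : (\int[mu]_x (inner (m x) th)%:E <= \int[mu]_x (l1norm (m x))%:E)%E.
      apply: ge0_le_integral => //.
      - by move=> x _; rewrite lee_fin f0.
      - by apply/measurable_EFinP.
      - by apply/measurable_EFinP; exact: meas_l1.
      - by move=> x _; rewrite lee_fin inner_le.
    by move: (le_trans h (hB m hm)); rewrite If1 lee_fin.
  have cpos : 0 < c.
    have : 0 < c%:~R :> R.
      by apply: lt_le_trans (ceil_ge _); apply: divr_gt0 => //; lra.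
    by rewrite ltr0z.
  have pR : p%:R = c%:~R :> R by rewrite /p natr_absz gtr0_norm.
  have p0 : (0 < p)%N by rewrite /p absz_gt0 gt_eqF.
  have k0 : (0 < k)%N by rewrite /k muln_gt0 p0.
  have kR : (0 : R) < k%:R by rewrite ltr0n.
  have [t ht] : exists t : {ffun 'I_d -> 'I_k},
      forall i, `|th ord0 i - gridv R d k t ord0 i| <= 1 / k%:R.
    have /choice [h hh] : forall i : 'I_d, exists j : 'I_k,
        `|th ord0 i - (-1 + (2 * j%:R + 1) / k%:R)| <= 1 / k%:R.
      by move=> i; apply: grid_ex => //; rewrite -ler_norml; exact: hth.
    by exists [ffun i => h i] => i; rewrite /gridv mxE ffunE.
  pose q : ('I_N * {ffun 'I_d -> 'I_k})%type := (Ordinal hn, t).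
  have Pq : Phi q = Gf X R d k m (gridv R d k t) by rewrite /Phi /= hun.
  pose U := fun x => inner (m x) (gridv R d k t) + l1norm (m x) / k%:R.
  have hd : forall x, `|inner (m x) th - inner (m x) (gridv R d k t)|
      <= l1norm (m x) / k%:R.
    by move=> x; have := @inner_diff R d (m x) _ _ _ ht; rewrite mul1r.
  have fU : forall x, inner (m x) th <= U x.
    move=> x; have := hd x; rewrite ler_norml /U => /andP[h1 h2]; lra.
  have UG : forall x, Phi q x = U x.
    by move=> x; rewrite Pq /Gf max_r //; apply: le_trans (f0 x) (fU x).
  have l10 : forall x, 0 <= l1norm (m x) by move=> x; rewrite /l1norm sumr_ge0.
  exists (Phi q).
    exists (index q (enum {: 'I_N * {ffun 'I_d -> 'I_k}})).
      by rewrite /= cardE index_mem mem_enum.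
    rewrite /psi (nth_map q (fun=> 0)); first by rewrite nth_index // mem_enum.
    by rewrite index_mem mem_enum.
  split; last by move=> x; rewrite UG fU.
  rewrite /l1dist.
  have eqf : (fun x => (`|inner (m x) th - Phi q x|)%:E) =
      (fun x => (U x - inner (m x) th)%:E).
    by apply/funext => x; rewrite UG ler0_norm ?opprB // subr_le0 fU.
  rewrite eqf.
  apply: (@le_trans _ _ (\int[mu]_x ((2 / k%:R * l1norm (m x))%:E))%E).
    apply: ge0_le_integral => //.
    - move=> x _; rewrite lee_fin subr_ge0; exact: fU.
    - apply/measurable_EFinP; apply: measurable_funB => //.
      apply: measurable_funD; first exact: meas_inner.
      by apply: measurable_funM; [exact: meas_l1 | exact: measurable_cst].
    - apply/measurable_EFinP.
      by apply: measurable_funM; [exact: measurable_cst | exact: meas_l1].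
    - move=> x _; rewrite lee_fin.
      have e : 2 / k%:R * l1norm (m x) = l1norm (m x) / k%:R + l1norm (m x) / k%:R.
        by field; rewrite lt0r_neq0.
      have := hd x; rewrite ler_norml /U e => /andP[h1 h2]; lra.
  under eq_integral => x _ do rewrite EFinM.
  rewrite ge0_integralZl_EFin //; try (by apply/measurable_EFinP; exact: meas_l1);
    try (by move=> x _; rewrite lee_fin).
  - apply: (@le_trans _ _ ((2 / k%:R)%:E * Bmu%:E)%E).
      apply: lee_wpmul2l; last exact: hB.
      by rewrite lee_fin; apply: divr_ge0 => //; apply: ltW.
    rewrite -EFinM lee_fin /k natrM pR.
    have C0 : (0 : R) < c%:~R by rewrite ltr0z.
    have -> : 2 / (2 * c%:~R) * Bmu = (Bmu / gamma) / c%:~R * gamma.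
      by field; rewrite !lt0r_neq0.
    apply: ler_piMl; first exact: ltW.
    by rewrite ler_pdivrMr // mul1r ceil_ge.
- exists #|{: 'I_N * {ffun 'I_d -> 'I_k}}|; split; first exact: card_image_le.
  rewrite card_prod !card_ord card_ffun !card_ord natrM natrX /k natrM.
  case: (posnP N) => [->|N0]; first by rewrite !mul0r.
  have [m0 hm0] : Ups !=set0.
    apply/set0P/eqP => U0; move: hle2; rewrite U0 => /card_le0P I0.
    have : `I_N 0%N by rewrite /=.
    by rewrite I0.
  have B0 : 0 <= Bmu.
    have := le_trans (integral_ge0 _ _) (hB m0 hm0); rewrite lee_fin; apply.
    by move=> x _; rewrite lee_fin /l1norm sumr_ge0.
  have c0 : (0 <= c)%R.
    rewrite /c ceil_ge0; apply: lt_le_trans (divr_ge0 B0 (ltW hg)); lra.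
  by rewrite /p natr_absz ger0_norm.
- by move=> g [n _ <-] x; apply: nth_ge0.
Qed.
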